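(* Let $S$ be a numerical semigroup with minimal generators $e<a_1<\dots<a_t$. Let $0\le i<e$ and write ${\rm adj}(S_i)=\{u_0<u_1<u_2<\cdots\}$. Let $j>0$, $0\le k<j$ and $\mathbf x\in\mathcal R(u_j)$. Then $|\mathbf x|<\min{\rm ord}(u_k;B^{\mathcal D})-\frac{u_j-u_k}{e}$.
   Context: A numerical semigroup is a submonoid of $(\mathbb N,+)$ with finite complement. ${\rm ord}(n;S)$ is the maximum of $\sum c_i$ over $(c_0,\dots,c_t)\in\mathbb N^{t+1}$ with $c_0e+\sum c_ia_i=n$. Let $d_i=a_i-e$, $B=\langle e,d_1,\dots,d_t\rangle$, $\mathcal D=(e,d_1,\dots,d_t)$. A $B^{\mathcal D}$-factorization of $b$ is $\mathbf x=(x_0,\dots,x_t)\in\mathbb N^{t+1}$ with $x_0e+\sum x_id_i=b$, of length $|\mathbf x|=\sum x_i$. $\min{\rm ord}(b;B^{\mathcal D})$ is the minimal such length, and $\mathcal P(b)$ is the set of all of them. $S_i=\{s\in S:s\equiv i\pmod e\}$ and ${\rm adj}(S_i)=\{s-{\rm ord}(s;S)e:s\in S_i\}$. Define $\mathcal R(u_0)=\mathcal P(u_0)$ and, for $j>0$, $\mathcal R(u_j)=\{\mathbf x\in\mathcal P(u_j):|\mathbf x|<\min{\rm ord}(u_{j-1};B^{\mathcal D})-\frac{u_j-u_{j-1}}{e}\}$. *)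

(* Defs.v *)
From mathcomp Require Import all_boot all_algebra.
Set Implicit Arguments. Unset Strict Implicit. Unset Printing Implicit Defensive.
Import GRing.Theory Num.Theory.

(* Generators: e = a_0 and a_1 < ... < a_t given by a : nat -> nat
   (the value a 0 is ignored).  Coefficient vectors in N^{t+1} are
   represented by functions c : nat -> nat, only c 0 .. c t matter. *)

Definition eval_S (e : nat) (a : nat -> nat) (t : nat) (c : nat -> nat) : nat :=
  c 0 * e + \sum_(1 <= i < t.+1) c i * a i.

Definition len (t : nat) (c : nat -> nat) : nat := \sum_(i < t.+1) c i.

Definition inS e a t (n : nat) : Prop := exists c, eval_S e a t c = n.

Definition numerical e a t : Prop := exists N, forall n, N <= n -> inS e a t n.

Definition gen e (a : nat -> nat) (i : nat) : nat := if i is 0 then e else a i.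
Definition minimal_gens e a t : Prop :=
  [/\ 0 < e,
      forall i, 1 <= i <= t -> gen e a i.-1 < a i
    & forall i, i <= t -> ~ exists c : nat -> nat,
        c i = 0 /\ \sum_(k < t.+1) c k * gen e a k = gen e a i].

Definition is_ord e a t (n m : nat) : Prop :=
  (exists c, eval_S e a t c = n /\ len t c = m) /\
  (forall c, eval_S e a t c = n -> len t c <= m).

(* d_i = a_i - e ; B^D-factorizations: x_0 e + sum x_i d_i = b *)
Definition eval_B e (a : nat -> nat) (t : nat) (x : nat -> nat) : nat :=
  x 0 * e + \sum_(1 <= i < t.+1) x i * (a i - e).

Definition inP e a t (b : nat) (x : nat -> nat) : Prop := eval_B e a t x = b.

Definition is_minord e a t (b m : nat) : Prop :=
  (exists x, inP e a t b x /\ len t x = m) /\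
  (forall x, inP e a t b x -> m <= len t x).

Definition in_adj e a t (i v : nat) : Prop :=
  exists s m, [/\ inS e a t s, s %% e = i, is_ord e a t s m & v = s - m * e].

Definition adj_enum e a t (i : nat) (u : nat -> nat) (j : nat) : Prop :=
  [/\ forall m, m <= j -> in_adj e a t i (u m),
      forall m, m < j -> u m < u m.+1
    & forall v, in_adj e a t i v -> v <= u j -> exists2 m, m <= j & v = u m].

Definition inR e a t (u : nat -> nat) (j : nat) (x : nat -> nat) : Prop :=
  inP e a t (u j) x /\
  (j = 0 \/ exists m, is_minord e a t (u j.-1) m /\
     ((len t x)%:R < m%:R - ((u j)%:R - (u j.-1)%:R) / e%:R :> rat)%R).

(* Main.v *)
Require Import Defs.
From mathcomp Require Import all_boot all_algebra.
From mathcomp Require Import zify ring lra.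
From Stdlib Require Import Classical.
Import GRing.Theory Num.Theory.

Lemma gens_ge e a t : minimal_gens e a t -> forall i, 1 <= i <= t -> e <= a i.
Proof.
case=> _ Hlt _; elim=> [//|[|n] IH] /andP[_ Hn].
- by have := Hlt 1 ltac:(lia) => /= /ltnW.
- have := Hlt n.+2 ltac:(lia) => /= H.
  have := IH ltac:(lia); lia.
Qed.

Lemma split_sum e a t (y : nat -> nat) : (forall i, 1 <= i <= t -> e <= a i) ->
  \sum_(1 <= i < t.+1) y i * a i =
  \sum_(1 <= i < t.+1) y i * (a i - e) + (\sum_(1 <= i < t.+1) y i) * e.
Proof.
move=> He; rewrite big_distrl -big_split /=; apply: eq_big_nat => i Hi.
by rewrite -mulnDr subnK // He.
Qed.

Lemma len_split t (y : nat -> nat) : len t y = y 0 + \sum_(1 <= i < t.+1) y i.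
Proof. by rewrite /len -(big_mkord xpredT) big_ltn. Qed.

Lemma evalS_split e a t c : minimal_gens e a t ->
  eval_S e a t c = \sum_(1 <= i < t.+1) c i * (a i - e) + len t c * e.
Proof.
move=> Hm; rewrite /eval_S (@split_sum e); last exact: gens_ge Hm.
rewrite len_split mulnDl; lia.
Qed.

Lemma key e a t i w v q (y : nat -> nat) : minimal_gens e a t ->
  in_adj e a t i w -> eval_B e a t y = v -> v + q * e = w -> 0 < q ->
  exists2 L, q + L <= len t y &
    exists x, inP e a t w x /\ len t x <= L.
Proof.
move=> Hm [s [L [_ _ [[c [Hc Hlc]] Hmax] ->]]] Hy Hw Hq.
set Dc := \sum_(1 <= i < t.+1) c i * (a i - e).
have Hs : s = Dc + L * e by rewrite -Hc -Hlc evalS_split.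
exists L.
- rewrite leqNgt; apply/negP => Hlt.
  set Sy := \sum_(1 <= i < t.+1) y i.
  set Dy := \sum_(1 <= i < t.+1) y i * (a i - e).
  have Hly : len t y = y 0 + Sy by rewrite len_split.
  pose c' := fun n => if n is 0 then q + L + y 0 - Sy else y n.
  have E1 : \sum_(1 <= i < t.+1) c' i = Sy.
    by apply: eq_big_nat => -[|n].
  have E2 : \sum_(1 <= i < t.+1) c' i * (a i - e) = Dy.
    by apply: eq_big_nat => -[|n].
  have Hev : eval_S e a t c' = s.
    rewrite evalS_split // E2 len_split E1 /=.
    move: Hw Hs Hy; rewrite /eval_B -/Dy => Hw Hs Hy.
    have : s - L * e = Dc by lia.
    move: Hly Hlt; nia.
  have := Hmax _ Hev; rewrite len_split E1 /=; lia.
- pose x := fun n => if n is 0 then 0 else c n.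
  exists x; split.
  + rewrite /inP /eval_B /=; rewrite Hs addnK /Dc.
    by apply: eq_big_nat => -[|n].
  + rewrite len_split /= -Hlc len_split.
    have -> : \sum_(1 <= i < t.+1) x i = \sum_(1 <= i < t.+1) c i.
      by apply: eq_big_nat => -[|n].
    lia.
Qed.

Lemma adj_facts e a t i v : minimal_gens e a t -> in_adj e a t i v ->
  v %% e = i /\ exists x, inP e a t v x.
Proof.
move=> Hm [s [L [_ Hsi [[c [Hc Hlc]] _] ->]]].
set Dc := \sum_(1 <= i < t.+1) c i * (a i - e).
have Hs : s = Dc + L * e by rewrite -Hc -Hlc evalS_split.
split.
- by rewrite Hs addnK -Hsi Hs addnC modnMDl.
- pose x := fun n => if n is 0 then 0 else c n.
  exists x; rewrite /inP /eval_B /= Hs addnK /Dc.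
  by apply: eq_big_nat => -[|n].
Qed.

Lemma exists_min (P : nat -> Prop) : (exists n, P n) ->
  exists n, P n /\ forall m, P m -> n <= m.
Proof.
move=> [n Hn]; apply: NNPP => Hno.
suff H : forall k, forall m, m <= k -> ~ P m by exact: (H n n (leqnn n) Hn).
elim=> [|k IH] m Hmk Pm.
- apply: Hno; exists m; split=> // m' _; lia.
- apply: Hno; exists m; split=> // m' Pm'; rewrite leqNgt; apply/negP=> Hlt.
  apply: (IH m') => //; lia.
Qed.

Lemma adj_mono e a t i u j : adj_enum e a t i u j ->
  forall m n, m < n -> n <= j -> u m < u n.
Proof.
case=> _ Hlt _ m; elim=> [//|n IH] Hmn Hn.
have H1 := Hlt n Hn; rewrite ltnS leq_eqVlt in Hmn.
case/orP: Hmn => [/eqP->//|Hmn].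
exact: ltn_trans (IH Hmn (ltnW Hn)) H1.
Qed.

Arguments adj_mono [e a t i u j].
Arguments adj_facts [e a t i v].
Arguments key [e a t i w v q y].

Theorem lemma3p8 (e : nat) (a : nat -> nat) (t : nat)
  (Hmin : minimal_gens e a t) (Hnum : numerical e a t)
  (i : nat) (Hi : i < e) (u : nat -> nat) (j k : nat)
  (Hu : adj_enum e a t i u j) (Hj : 0 < j) (Hk : k < j)
  (x : nat -> nat) (Hx : inR e a t u j x) :
  exists m, is_minord e a t (u k) m /\
    ((len t x)%:R < m%:R - ((u j)%:R - (u k)%:R) / e%:R :> rat)%R.
Proof.
have He : 0 < e by case: Hmin.
case: Hx => _ [Hj0|[mj [[Hmj1 Hmj2] Hineq]]]; first by subst j.
have [->|Hkn] := eqVneq k j.-1; first by exists mj; split=> //; split.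
have HkJ : k < j.-1 by clear -Hk Hkn; lia.
have Hlt : u k < u j.-1 by apply: (adj_mono Hu) => //; clear -Hj; lia.
case: (Hu) => Hadj _ _.
have [Hmk [y0 Hy0]] := adj_facts Hmin (Hadj k (ltnW Hk)).
have [HmJ _] := adj_facts Hmin (Hadj j.-1 (leq_pred j)).
have Hdvd : e %| u j.-1 - u k.
  rewrite -eqn_mod_dvd; last exact: ltnW Hlt.
  by rewrite Hmk HmJ.
set q := (u j.-1 - u k) %/ e.
have Hq : u k + q * e = u j.-1 by rewrite divnK // subnKC //; exact: ltnW Hlt.
have Hq0 : 0 < q.
  rewrite lt0n; apply/negP => /eqP Hq0'.
  by move: Hlt; rewrite -Hq Hq0' mul0n addn0 ltnn.
have [M [[y [Hy Hly]] HMmin]] :=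
  @exists_min _ (ex_intro (fun m => exists x, inP e a t (u k) x /\ len t x = m) _
               (ex_intro _ y0 (conj Hy0 erefl))).
have [L HL [x' [Hx' Hlx']]] := key Hmin (Hadj j.-1 (leq_pred j)) Hy Hq Hq0.
have Hmj := Hmj2 _ Hx'.
exists M; split.
- split; first by exists y.
  move=> z Hz; exact: HMmin (ex_intro _ z (conj Hz erefl)).
- have HqM : (mj + q <= M)%N by clear -HL Hly Hlx' Hmj; lia.
  have HqR : ((u j.-1)%:R = (u k)%:R + q%:R * e%:R :> rat)%R by rewrite -Hq natrD natrM.
  have HMR : (mj%:R + q%:R <= M%:R :> rat)%R by rewrite -natrD ler_nat.
  have HeR : (e%:R != 0 :> rat)%R by rewrite pnatr_eq0 -lt0n.
  have Eq : (((u j)%:R - (u k)%:R) / e%:R = ((u j)%:R - (u j.-1)%:R) / e%:R + q%:R :> rat)%R.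
    by rewrite HqR; field.
  rewrite Eq; lra.
Qed.
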